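(* Let $n\ge2$ and $\delta>0$, and let $\mathtt S_{n,\delta}:=\{(\mathbf a,\mathbf b)\in\mathtt S_n: a_0>\delta\}$. Then the inverse NLFT is Lipschitz continuous on $\mathtt S_{n,\delta}$ (Euclidean metrics), with a Lipschitz constant depending only on $n$ and $\delta$.
   Context: For $(\mathbf a,\mathbf b)\in\mathbb C^n\times\mathbb C^n$ let $a(z)=\sum_{k=0}^{n-1}a_kz^{-k}$, $b(z)=\sum_{k=0}^{n-1}b_kz^k$, and $a^*(z):=\overline{a(1/\overline z)}$ (similarly $b^*$). $\mathtt S_n$ is the set of $(\mathbf a,\mathbf b)$ with $a_0$ real and positive and $aa^*+bb^*=1$. The NLFT of $\boldsymbol\gamma$ supported in $\{0,\dots,n-1\}$ is $\prod_{k=0}^{n-1}\frac{1}{\sqrt{1+|\gamma_k|^2}}\begin{pmatrix}1&\gamma_kz^k\\-\overline{\gamma_k}z^{-k}&1\end{pmatrix}=\begin{pmatrix}a&b\\-b^*&a^*\end{pmatrix}$ (ordered by increasing $k$); it is a bijection from such sequences onto $\mathtt S_n$ and its inverse is the inverse NLFT. *)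

(* Defs.v *)
From HB Require Import structures.
From mathcomp Require Import all_boot all_order all_algebra.
From mathcomp Require Import complex.
From mathcomp Require Import reals.
Set Implicit Arguments. Unset Strict Implicit. Unset Printing Implicit Defensive.
Import Order.TTheory GRing.Theory Num.Theory.
Local Open Scope ring_scope.
Local Open Scope complex_scope.

Section NLFT.
Variable R : realType.
Local Notation C := R[i].

Definition cabs2 (z : C) : R := complex.Re z ^+ 2 + complex.Im z ^+ 2.

(* z^k times the k-th factor of the NLFT, i.e. the polynomial matrix
   [[ z^k, g z^(2k) ], [ -conj(g), z^k ]]  (without the normalising scalar) *)
Definition nlft_factor (g : C) (k : nat) : 'M[{poly C}]_2 :=
  \matrix_(i < 2, j < 2)
     (if (i == 0) && (j == 0) then 'X^k
      else if (i == 0) && (j == 1) then g *: 'X^(k.*2)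
      else if (i == 1) && (j == 0) then (- g^*)%:P
      else 'X^k).

Definition nlft_scal (g : C) : C := ((Num.sqrt (1 + cabs2 g))^-1)%:C.

(* P = z^S * (NLFT matrix), S = n(n-1)/2, product ordered by increasing k *)
Definition nlft_polymx (n : nat) (gam : 'I_n -> C) : 'M[{poly C}]_2 :=
  \prod_(k < n) ((nlft_scal (gam k))%:P *: nlft_factor (gam k) k).

Definition nlft_shift (n : nat) : nat := 'C(n, 2).

(* a(z) = sum_k a_k z^{-k}:  a_k = coefficient of z^{S-k} in P_{00} *)
Definition nlft_a (n : nat) (gam : 'I_n -> C) (k : 'I_n) : C :=
  (nlft_polymx gam 0 0)`_(nlft_shift n - k).

(* b(z) = sum_k b_k z^k:  b_k = coefficient of z^{S+k} in P_{01} *)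
Definition nlft_b (n : nat) (gam : 'I_n -> C) (k : 'I_n) : C :=
  (nlft_polymx gam 0 1)`_(nlft_shift n + k).

Definition dist_Cn (n : nat) (u v : 'I_n -> C) : R :=
  Num.sqrt (\sum_(k < n) cabs2 (u k - v k)).

Definition dist_Cn2 (n : nat) (u v u' v' : 'I_n -> C) : R :=
  Num.sqrt (\sum_(k < n) cabs2 (u k - u' k) + \sum_(k < n) cabs2 (v k - v' k)).

End NLFT.

(* Main.v *)
Require Import Defs.
From HB Require Import structures.
From mathcomp Require Import all_boot all_order all_algebra.
From mathcomp Require Import complex.
From mathcomp Require Import reals.
From mathcomp Require Import ring lra zify.
Set Implicit Arguments. Unset Strict Implicit. Unset Printing Implicit Defensive.
Import Order.TTheory GRing.Theory Num.Theory.
Local Open Scope ring_scope.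
Local Open Scope complex_scope.
Section S.
Variable R : realType.
Local Notation C := R[i].
Lemma cabs2M (x y : C) : cabs2 (x * y) = cabs2 x * cabs2 y.
Proof. case: x => a b; case: y => c d; rewrite /cabs2 /=. ring. Qed.
Lemma cabs2_ge0 (x : C) : 0 <= cabs2 x.
Proof. by rewrite /cabs2 addr_ge0 // sqr_ge0. Qed.
Lemma cabs2D (x y : C) : cabs2 (x + y) <= 2 * (cabs2 x + cabs2 y).
Proof. case: x => a b; case: y => c d; rewrite /cabs2 /=. have := sqr_ge0 (a - c); have := sqr_ge0 (b - d). nra. Qed.
Lemma cabs2R (r : R) : cabs2 r%:C = r ^+ 2.
Proof. rewrite /cabs2 /=. ring. Qed.
Lemma cabs2J (x : C) : cabs2 x^* = cabs2 x.
Proof. case: x => a b; rewrite /cabs2 /=. ring. Qed.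
Lemma cabs2N (x : C) : cabs2 (- x) = cabs2 x.
Proof. case: x => a b; rewrite /cabs2 /=. ring. Qed.
Lemma cabs20 : cabs2 (0:C) = 0.
Proof. rewrite /cabs2 /=. ring. Qed.
Lemma mulJ (g : C) : g^* * g = (cabs2 g)%:C.
Proof. case: g => a b; rewrite /cabs2 /=. apply/eqP; rewrite eq_complex /=; apply/andP; split; apply/eqP; ring. Qed.
Definition sr (g : C) : R := (Num.sqrt (1 + cabs2 g))^-1.
Definition Mk (g : C) (k : nat) : 'M[{poly C}]_2 := (nlft_scal g)%:P *: nlft_factor g k.
Definition Rm (gg : nat -> C) m := \prod_(0 <= k < m) Mk (gg k) k.
Definition Am gg m := Rm gg m 0 0.
Definition Bm gg m := Rm gg m 0 1.

Lemma ord0E : (ord0 : 'I_2) = 0. Proof. exact: val_inj. Qed.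
Lemma ord1E : (lift ord0 ord0 : 'I_2) = 1. Proof. exact: val_inj. Qed.
Lemma Rm_S gg m : Rm gg m.+1 = Rm gg m *m Mk (gg m) m.
Proof. by rewrite /Rm big_nat_recr //= mulmxE. Qed.

Lemma Am_S gg m d : (Am gg m.+1)`_d =
  (sr (gg m))%:C * ((if (m <= d)%N then (Am gg m)`_(d - m) else 0) - (gg m)^*%C * (Bm gg m)`_d).
Proof.
rewrite /Am /Bm Rm_S mxE big_ord_recl big_ord1 /Mk !mxE /=.
rewrite coefD mulrCA coefCM coefMXn mulrCA coefCM coefMC.
rewrite /nlft_scal -/(sr (gg m)) -mulrDr; congr (_ * _).
rewrite ltnNge mulrN (mulrC _ (gg m)^*%C). rewrite ord0E ord1E. by case: (m <= d)%N.
Qed.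
Lemma Bm_S gg m d : (Bm gg m.+1)`_d =
  (sr (gg m))%:C * ((if (m.*2 <= d)%N then gg m * (Am gg m)`_(d - m.*2) else 0) + (if (m <= d)%N then (Bm gg m)`_(d - m) else 0)).
Proof.
rewrite /Am /Bm Rm_S mxE big_ord_recl big_ord1 /Mk !mxE /=.
rewrite coefD mulrCA coefCM -scalerAr coefZ coefMXn (mulrCA (Rm gg m 0 (lift ord0 ord0))) coefCM coefMXn.
rewrite /nlft_scal -/(sr (gg m)) -mulrDr; congr (_ * _).
rewrite ord0E ord1E !ltnNge. by case: (m.*2 <= d)%N; case: (m <= d)%N; rewrite /= ?mulr0.
Qed.
Definition E m := 'C(m, 2).
Lemma E_S m : E m.+1 = (E m + m)%N.
Proof. by rewrite /E binS bin1. Qed.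
Definition cm gg m := \prod_(0 <= k < m) sr (gg k).

Lemma Rm0 gg : Rm gg 0 = 1.
Proof. by rewrite /Rm big_nil. Qed.

Ltac simp0 := rewrite ?(mulr0, subr0, oppr0, add0r, addr0, sub0r, mul0r).
Lemma inv gg m :
  [/\ (forall d, (E m < d)%N -> (Am gg m)`_d = 0),
      (forall d, (E m + m <= d)%N -> (Bm gg m)`_d = 0),
      (forall d, (d + m.-1 < E m)%N -> (Am gg m)`_d = 0),
      (forall d, (d < E m)%N -> (Bm gg m)`_d = 0) &
      (Am gg m)`_(E m) = (cm gg m)%:C].
Proof.
elim: m => [|m [IH1 IH2 IH3 IH4 IH5]].
  rewrite /Am /Bm Rm0 /cm big_nil /E /= !mxE /=.
  by split => [d|d|d|d|]; rewrite /E /= ?coefC ?coef0 //; case: d.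
rewrite E_S; split; [move=> d Hd..|].
- rewrite Am_S IH2; last by lia.
  case: leqP => H; last by simp0.
  by rewrite IH1; [simp0|lia].
- have H1 : (m.*2 <= d)%N by lia.
  have H2 : (m <= d)%N by lia.
  rewrite Bm_S H1 H2 IH1; last by lia.
  by rewrite IH2; [simp0|lia].
- rewrite Am_S IH4; last by lia.
  case: leqP => H; last by simp0.
  by rewrite IH3; [simp0|lia].
- rewrite Bm_S.
  case: (leqP m.*2 d) => H1; case: (leqP m d) => H2; simp0.
  + rewrite IH3; last by lia.
    by rewrite IH4; [simp0|lia].
  + lia.
  + by rewrite IH4; [simp0|lia].
  + done.
- rewrite Am_S leq_addl addnK IH5 IH2 // /cm big_nat_recr //= rmorphM /= mulrC.
  by simp0.
Qed.
Lemma Btop gg m : (Bm gg m.+1)`_(E m.+1 + m) = gg m * (cm gg m.+1)%:C.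
Proof.
have [_ IH2 _ _ IH5] := inv gg m.
rewrite Bm_S E_S.
have -> : (m.*2 <= E m + m + m)%N by lia.
have -> : (m <= E m + m + m)%N by lia.
have -> : (E m + m + m - m.*2 = E m)%N by lia.
rewrite IH5 IH2; last by lia.
rewrite addr0 /cm big_nat_recr //= rmorphM /=. ring.
Qed.

Lemma sr_ge0 g : 0 <= sr g.
Proof. by rewrite /sr invr_ge0 sqrtr_ge0. Qed.

Lemma srK g : sr g ^+ 2 * (1 + cabs2 g) = 1.
Proof.
have h : 0 < 1 + cabs2 g by rewrite ltr_wpDr ?cabs2_ge0.
rewrite /sr exprVn sqr_sqrtr ?ltW // mulVf //.
by rewrite gt_eqF.
Qed.

Lemma srKC g : (sr g)%:C * (sr g)%:C * (1 + g^*%C * g) = 1.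
Proof.
rewrite mulJ; have := congr1 (real_complex R) (srK g).
by rewrite rmorphM rmorphD rmorphXn /= rmorph1 expr2.
Qed.

Lemma Am_inv gg m d : (Am gg m)`_d =
  (sr (gg m))%:C * ((Am gg m.+1)`_(d + m) + (gg m)^*%C * (Bm gg m.+1)`_(d + m.*2)).
Proof.
rewrite Am_S Bm_S leq_addl addnK leq_addl addnK.
have -> : (m <= d + m.*2)%N by lia.
have -> : (d + m.*2 - m = d + m)%N by lia.
rewrite -[LHS]mul1r -(srKC (gg m)). ring.
Qed.

Lemma Bm_inv gg m d : (Bm gg m)`_d =
  (sr (gg m))%:C * (- gg m * (Am gg m.+1)`_d + (Bm gg m.+1)`_(d + m)).
Proof.
rewrite Am_S Bm_S leq_addl addnK.
have -> : (m.*2 <= d + m)%N = (m <= d)%N by lia.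
case: (leqP m d) => H.
  have -> : (d + m - m.*2 = d - m)%N by lia.
  rewrite -[LHS]mul1r -(srKC (gg m)). ring.
rewrite -[LHS]mul1r -(srKC (gg m)). ring.
Qed.
Lemma sr_le1 g : sr g <= 1.
Proof.
have h := srK g; have h0 := sr_ge0 g; have h1 := cabs2_ge0 g.
nra.
Qed.

Lemma sr_gt0 g : 0 < sr g.
Proof.
have h := srK g; have h0 := sr_ge0 g.
rewrite lt_neqAle h0 andbT; apply/eqP => e; move: h; rewrite -e; nra.
Qed.

Lemma cm_ge0 gg m : 0 <= cm gg m.
Proof. by rewrite /cm prodr_ge0 // => k _; apply: sr_ge0. Qed.

Lemma cm_le1 gg m : cm gg m <= 1.
Proof. by rewrite /cm prodr_ile1 // => k _; rewrite sr_ge0 sr_le1. Qed.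

Lemma cm_mono gg m n : (m <= n)%N -> cm gg n <= cm gg m.
Proof.
move=> H; rewrite /cm (big_cat_nat (leq0n m) H) /=.
rewrite ler_piMr ?cm_ge0 // prodr_ile1 // => k _; by rewrite sr_ge0 sr_le1.
Qed.

Lemma cm_sr gg k n : (k < n)%N -> cm gg n <= sr (gg k).
Proof.
move=> H; apply: (le_trans (cm_mono gg H)).
rewrite /cm big_nat_recr //= ler_piMl ?sr_ge0 //.
by have := cm_le1 gg k.
Qed.

Lemma g_bound (delta : R) g : 0 < delta -> delta < sr g -> delta ^+ 2 * cabs2 g <= 1.
Proof.
move=> hd hs; have h := srK g; have h1 := cabs2_ge0 g.
have h2 : delta ^+ 2 <= sr g ^+ 2 by rewrite lerXn2r ?nnegrE ?sr_ge0 ?(ltW hd) ?(ltW hs).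
nra.
Qed.

Lemma aux_lip (s s' x y : R) : 0 < s -> 0 < s' -> s <= 1 -> s' <= 1 ->
  s ^+ 2 * (1 + x) = 1 -> s' ^+ 2 * (1 + y) = 1 -> (s - s') ^+ 2 <= (y - x) ^+ 2.
Proof.
move=> hs hs' h1 h1' hk hk'.
have e : (y - x) * (s ^+ 2 * s' ^+ 2) = (s - s') * (s + s').
  have ex : x * s ^+ 2 = 1 - s ^+ 2 by rewrite -hk; ring.
  have ey : y * s' ^+ 2 = 1 - s' ^+ 2 by rewrite -hk'; ring.
  rewrite mulrBl.
  have -> : y * (s ^+ 2 * s' ^+ 2) = s ^+ 2 * (y * s' ^+ 2) by ring.
  have -> : x * (s ^+ 2 * s' ^+ 2) = s' ^+ 2 * (x * s ^+ 2) by ring.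
  rewrite ex ey; ring.
have hp : 0 < s + s' by rewrite addr_gt0.
have hq : s ^+ 2 * s' ^+ 2 <= s + s'.
  have a1 : s ^+ 2 <= s by rewrite expr2 ler_piMr // ltW.
  have a2 : s' ^+ 2 <= 1 by rewrite expr2 mulr_ile1 // ltW.
  have a3 : s ^+ 2 * s' ^+ 2 <= s ^+ 2 by rewrite ler_piMr // sqr_ge0.
  lra.
have hq0 : 0 <= s ^+ 2 * s' ^+ 2 by rewrite mulr_ge0 // sqr_ge0.
rewrite -(ler_pM2r (exprn_gt0 2 hp)) -exprMn -e exprMn.
rewrite ler_wpM2l ?sqr_ge0 //.
by rewrite lerXn2r ?nnegrE // ?ltW.
Qed.

Lemma sr_lip g g' : (sr g - sr g') ^+ 2 <= cabs2 (g - g') * cabs2 (g + g').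
Proof.
apply: (le_trans (aux_lip (sr_gt0 g) (sr_gt0 g') (sr_le1 g) (sr_le1 g') (srK g) (srK g'))).
rewrite /cabs2; case: (g) => a b; case: (g') => c d /=.
have := sqr_ge0 ((a - c) * (b + d) - (b - d) * (a + c)).
nra.
Qed.
Lemma cabs2_add_le (u v : C) U V : cabs2 u <= U -> cabs2 v <= V -> cabs2 (u + v) <= 2 * (U + V).
Proof.
move=> hu hv; apply: (le_trans (cabs2D u v)).
by rewrite ler_wpM2l // lerD.
Qed.

Lemma cabs2_mul_le (u v : C) U V : cabs2 u <= U -> cabs2 v <= V -> cabs2 (u * v) <= U * V.
Proof. by move=> hu hv; rewrite cabs2M ler_pM // cabs2_ge0. Qed.

Lemma cabs2_sC_le (s : R) (v : C) S V : s ^+ 2 <= S -> cabs2 v <= V -> cabs2 (s%:C * v) <= S * V.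
Proof. by move=> hs hv; rewrite cabs2M cabs2R ler_pM // ?sqr_ge0 ?cabs2_ge0. Qed.

Lemma step_bound (s s' : R) (x x' y y' h h' : C) (W G T Gm S : R) :
  cabs2 x <= W -> cabs2 y <= W -> cabs2 h <= G -> cabs2 h' <= G ->
  0 <= s' -> s' <= 1 -> (s - s') ^+ 2 <= S ->
  cabs2 (x - x') <= T -> cabs2 (y - y') <= T -> cabs2 (h - h') <= Gm ->
  cabs2 (s%:C * (x + h * y) - s'%:C * (x' + h' * y')) <=
   2 * (S * (2 * (W + G * W)) + 1 * (2 * (T + 2 * (Gm * W + G * T)))).
Proof.
move=> hx hy hh hh' hs0 hs1 hS hxx hyy hhh.
have -> : s%:C * (x + h * y) - s'%:C * (x' + h' * y') =
  (s - s')%:C * (x + h * y) + s'%:C * ((x - x') + ((h - h') * y + h' * (y - y'))).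
  rewrite rmorphB /=; ring.
apply: cabs2_add_le.
  exact: (cabs2_sC_le hS (cabs2_add_le hx (cabs2_mul_le hh hy))).
apply: cabs2_sC_le; first by rewrite expr2 mulr_ile1.
exact: (cabs2_add_le hxx (cabs2_add_le (cabs2_mul_le hhh hy) (cabs2_mul_le hh' hyy))).
Qed.

Lemma strip (delta al al' : R) (g g' b b' : C) G : 0 < delta -> delta <= al ->
  b = g * al%:C -> b' = g' * al'%:C -> cabs2 g' <= G ->
  delta ^+ 2 * cabs2 (g - g') <= 2 * (cabs2 (b - b') + G * cabs2 (al%:C - al'%:C)).
Proof.
move=> hd hal -> -> hg.
have e : al%:C * (g - g') = (g * al%:C - g' * al'%:C) + g' * (al'%:C - al%:C) by ring.
apply: (@le_trans _ _ (cabs2 (al%:C * (g - g')))).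
  rewrite cabs2M cabs2R ler_wpM2r ?cabs2_ge0 //.
  by rewrite lerXn2r ?nnegrE ?(ltW hd) ?(le_trans (ltW hd) hal).
rewrite e; apply: cabs2_add_le => //.
apply: cabs2_mul_le => //.
by rewrite -opprB cabs2N.
Qed.
Lemma coef_bound gg G m : 0 <= G -> (forall k, (k < m)%N -> cabs2 (gg k) <= G) ->
  forall d, cabs2 (Am gg m)`_d <= (2 * (1 + G)) ^+ m /\ cabs2 (Bm gg m)`_d <= (2 * (1 + G)) ^+ m.
Proof.
move=> hG; elim: m => [|m IH] hg d.
  rewrite /Am /Bm Rm0 !mxE /= coefC coef0 cabs20 expr0; split => //.
  by case: d => [|d] /=; rewrite ?cabs20 // cabs2R expr1n.
have [IHA IHB] : (forall d, cabs2 (Am gg m)`_d <= (2 * (1 + G)) ^+ m) /\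
                 (forall d, cabs2 (Bm gg m)`_d <= (2 * (1 + G)) ^+ m).
  by split => d'; have [] := IH (fun k hk => hg k (leq_trans hk (leqnSn m))) d'.
set W := (2 * (1 + G)) ^+ m.
have hW : 0 <= W by rewrite /W exprn_ge0 // mulr_ge0 // addr_ge0.
have hgm := hg m (ltnSn m).
have hs : sr (gg m) ^+ 2 <= 1 by rewrite expr2 mulr_ile1 ?sr_ge0 ?sr_le1.
have -> : (2 * (1 + G)) ^+ m.+1 = 1 * (2 * (W + G * W)) by rewrite exprS /W; ring.
split.
  rewrite Am_S -mulNr; apply: (cabs2_sC_le hs); apply: cabs2_add_le.
    by case: ifP; rewrite ?cabs20.
  by apply: cabs2_mul_le; rewrite ?cabs2N ?cabs2J.
rewrite Bm_S addrC; apply: (cabs2_sC_le hs); apply: cabs2_add_le.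
  by case: ifP; rewrite ?cabs20.
case: ifP; rewrite ?cabs20 ?mulr_ge0 //.
by move=> _; apply: cabs2_mul_le.
Qed.
Ltac pos := repeat (apply: addr_ge0 || apply: mulr_ge0 || apply: exprn_ge0); rewrite ?ler01 //.

Section Main.
Variables (n : nat) (delta : R).
Hypothesis hd : 0 < delta.
Let G := (delta ^+ 2)^-1.
Lemma hG : 0 <= G. Proof. by rewrite /G invr_ge0 sqr_ge0. Qed.
Lemma hGd : G * delta ^+ 2 = 1. Proof. by rewrite /G mulVf // expf_neq0 // gt_eqF. Qed.

Lemma hGle (x y : R) : delta ^+ 2 * x <= y -> x <= G * y.
Proof. by move=> h; rewrite -[x]mul1r -hGd -mulrA ler_wpM2l ?hG. Qed.

Definition good gg := delta < cm gg n.

Lemma good_g gg k : good gg -> (k < n)%N -> cabs2 (gg k) <= G.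
Proof.
move=> hg hk.
have h := g_bound hd (lt_le_trans hg (cm_sr gg hk)).
by rewrite -[G]mulr1; apply: hGle.
Qed.

Lemma good_cm gg m : good gg -> (m <= n)%N -> delta <= cm gg m.
Proof. by move=> hg hm; apply: ltW (lt_le_trans hg (cm_mono gg hm)). Qed.

Definition claim j := exists K : R, 0 <= K /\ forall gg gg' (D : R), good gg -> good gg' -> 0 <= D ->
  (forall d, cabs2 ((Am gg n)`_d - (Am gg' n)`_d) <= D) ->
  (forall d, cabs2 ((Bm gg n)`_d - (Bm gg' n)`_d) <= D) ->
  [/\ (forall d, cabs2 ((Am gg (n - j))`_d - (Am gg' (n - j))`_d) <= K * D),
      (forall d, cabs2 ((Bm gg (n - j))`_d - (Bm gg' (n - j))`_d) <= K * D) &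
      (forall k, (n - j <= k < n)%N -> cabs2 (gg k - gg' k) <= K * D)].

Lemma claimP j : (j <= n)%N -> claim j.
Proof.
elim: j => [|j IH] hj.
  exists 1; split => // gg gg' D _ _ _ hA hB; rewrite subn0 !mul1r; split => // k hk; lia.
have [K [hK0 hK]] := IH (ltnW hj).
set m := (n - j.+1)%N.
have hm : (n - j = m.+1)%N by rewrite /m; lia.
have hmn : (m < n)%N by rewrite /m; lia.
have hG0 := hG.
have hW : 0 <= (2 * (1 + G)) ^+ m.+1 by pos.
set W := (2 * (1 + G)) ^+ m.+1.
have hKg : 0 <= G * (2 * (K + G * K)) by pos.
set Kg := G * (2 * (K + G * K)).
have hF : 0 <= 2 * (Kg * (2 * (G + G)) * (2 * (W + G * W)) + 1 * (2 * (K + 2 * (Kg * W + G * K)))) by pos.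
set F := 2 * (Kg * (2 * (G + G)) * (2 * (W + G * W)) + 1 * (2 * (K + 2 * (Kg * W + G * K)))).
exists (K + Kg + F); split; first by rewrite !addr_ge0.
move=> gg gg' D hg hg' hD hA hB.
have [hA1 hB1 hk1] := hK gg gg' D hg hg' hD hA hB.
rewrite hm in hA1 hB1 hk1.
have hgam : cabs2 (gg m - gg' m) <= Kg * D.
  have [_ _ _ _ a1] := inv gg m.+1.
  have [_ _ _ _ a1'] := inv gg' m.+1.
  have := strip (G := G) hd (good_cm hg hmn) (Btop gg m) (Btop gg' m) (good_g hg' hmn).
  rewrite -a1 -a1' => h.
  rewrite /Kg -mulrA; apply: hGle; apply: (le_trans h).
  rewrite -mulrA ler_wpM2l // mulrDl lerD //.
  by rewrite -mulrA ler_wpM2l.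
have hS : (sr (gg m) - sr (gg' m)) ^+ 2 <= Kg * D * (2 * (G + G)).
  apply: (le_trans (sr_lip _ _)); apply: ler_pM => //; rewrite ?cabs2_ge0 //.
  by apply: cabs2_add_le; rewrite ?cabs2N; apply: good_g.
have hWb := @coef_bound gg G m.+1 hG (fun k hk => good_g hg (leq_trans hk hmn)).
have hFD : F * D <= (K + Kg + F) * D by rewrite ler_wpM2r // lerDr addr_ge0.
split.
- move=> d; rewrite (Am_inv gg m d) (Am_inv gg' m d); apply: le_trans hFD.
  have := step_bound (W := W) (G := G) (T := K * D) (Gm := Kg * D) (S := Kg * D * (2 * (G + G)))
     (x := (Am gg m.+1)`_(d + m)) (y := (Bm gg m.+1)`_(d + m.*2)) (h := (gg m)^*%C)
     (x' := (Am gg' m.+1)`_(d + m)) (y' := (Bm gg' m.+1)`_(d + m.*2)) (h' := (gg' m)^*%C)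
     (s := sr (gg m)) (s' := sr (gg' m))
     (proj1 (hWb _)) (proj2 (hWb _)).
  rewrite !cabs2J -rmorphB cabs2J.
  move=> /(_ (good_g hg hmn) (good_g hg' hmn) (sr_ge0 _) (sr_le1 _) hS (hA1 _) (hB1 _) hgam) h.
  apply: (le_trans h); rewrite le_eqVlt; apply/orP; left; apply/eqP; rewrite /F; ring.
- move=> d; rewrite (Bm_inv gg m d) (Bm_inv gg' m d) ![_ * _ + (Bm _ _)`__]addrC; apply: le_trans hFD.
  have := step_bound (W := W) (G := G) (T := K * D) (Gm := Kg * D) (S := Kg * D * (2 * (G + G)))
     (x := (Bm gg m.+1)`_(d + m)) (y := (Am gg m.+1)`_d) (h := - gg m)
     (x' := (Bm gg' m.+1)`_(d + m)) (y' := (Am gg' m.+1)`_d) (h' := - gg' m)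
     (s := sr (gg m)) (s' := sr (gg' m))
     (proj2 (hWb _)) (proj1 (hWb _)).
  rewrite !cabs2N -opprD cabs2N.
  move=> /(_ (good_g hg hmn) (good_g hg' hmn) (sr_ge0 _) (sr_le1 _) hS (hB1 _) (hA1 _) hgam) h.
  apply: (le_trans h); rewrite le_eqVlt; apply/orP; left; apply/eqP; rewrite /F; ring.
- move=> k hk; case/andP: hk => hk1' hk2; case: (ltngtP k m) => hkm.
  + by move: hk1'; rewrite leqNgt hkm.
  + apply: (le_trans (hk1 k _)); first by rewrite hkm.
    by rewrite ler_wpM2r // -addrA lerDl addr_ge0.
  + rewrite hkm; apply: (le_trans hgam).
    by rewrite ler_wpM2r // -addrA addrCA lerDl addr_ge0.
Qed.
End Main.
Lemma le_sum1 n (F : 'I_n -> R) i : (forall j, 0 <= F j) -> F i <= \sum_j F j.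
Proof. by move=> h; rewrite (bigD1 i) //= lerDl sumr_ge0. Qed.

Definition ext n (gam : 'I_n -> C) (k : nat) : C := oapp gam 0 (insub k).

Lemma extE n (gam : 'I_n -> C) (i : 'I_n) : ext gam i = gam i.
Proof. by rewrite /ext valK. Qed.

Lemma polymxE n (gam : 'I_n -> C) : nlft_polymx gam = Rm (ext gam) n.
Proof. by rewrite /nlft_polymx /Rm big_mkord; apply: eq_bigr => i _; rewrite /Mk extE. Qed.

Lemma aE n (gam : 'I_n -> C) k : nlft_a gam k = (Am (ext gam) n)`_(E n - k).
Proof. by rewrite /nlft_a polymxE. Qed.

Lemma bE n (gam : 'I_n -> C) k : nlft_b gam k = (Bm (ext gam) n)`_(E n + k).
Proof. by rewrite /nlft_b polymxE. Qed.

Lemma final n (delta : R) : 0 < delta ->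
  exists L : R,
    forall (Hn : (0 < n)%N) (gam gam' : 'I_n -> R[i]),
      delta%:C < nlft_a gam (Ordinal Hn) ->
      delta%:C < nlft_a gam' (Ordinal Hn) ->
      dist_Cn gam gam' <=
        L * dist_Cn2 (nlft_a gam) (nlft_b gam) (nlft_a gam') (nlft_b gam').
Proof.
move=> hd.
have [K [hK0 hK]] := @claimP n delta hd n (leqnn n).
exists (Num.sqrt (n%:R * K)).
move=> Hn gam gam' ha ha'.
have good1 : forall g : 'I_n -> C, delta%:C < nlft_a g (Ordinal Hn) -> good n delta (ext g).
  move=> g; rewrite aE /= subn0; have [_ _ _ _ ->] := inv (ext g) n.
  by rewrite ltcR.
set D := \sum_(k < n) cabs2 (nlft_a gam k - nlft_a gam' k) +
         \sum_(k < n) cabs2 (nlft_b gam k - nlft_b gam' k).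
have hD : 0 <= D by rewrite addr_ge0 // sumr_ge0 // => k _; apply: cabs2_ge0.
have [iA1 iB1 iA2 iB2 _] := inv (ext gam) n.
have [iA1' iB1' iA2' iB2' _] := inv (ext gam') n.
have hA : forall d, cabs2 ((Am (ext gam) n)`_d - (Am (ext gam') n)`_d) <= D.
  move=> d; case: (ltnP (E n) d) => h1.
    by rewrite iA1 // iA1' // subrr cabs20.
  case: (ltnP (d + n.-1) (E n)) => h2.
    by rewrite iA2 // iA2' // subrr cabs20.
  have hk : (E n - d < n)%N by lia.
  have -> : d = (E n - Ordinal hk)%N by rewrite /=; lia.
  rewrite -!aE.
  have h := @le_sum1 _ (fun k => cabs2 (nlft_a gam k - nlft_a gam' k)) (Ordinal hk) (fun j => cabs2_ge0 _).
  apply: (le_trans h).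
  by rewrite /D lerDl sumr_ge0 // => k _; apply: cabs2_ge0.
have hB : forall d, cabs2 ((Bm (ext gam) n)`_d - (Bm (ext gam') n)`_d) <= D.
  move=> d; case: (ltnP d (E n)) => h1.
    by rewrite iB2 // iB2' // subrr cabs20.
  case: (leqP (E n + n) d) => h2.
    by rewrite iB1 // iB1' // subrr cabs20.
  have hk : (d - E n < n)%N by lia.
  have -> : d = (E n + Ordinal hk)%N by rewrite /=; lia.
  rewrite -!bE.
  have h := @le_sum1 _ (fun k => cabs2 (nlft_b gam k - nlft_b gam' k)) (Ordinal hk) (fun j => cabs2_ge0 _).
  apply: (le_trans h).
  by rewrite /D lerDr sumr_ge0 // => k _; apply: cabs2_ge0.
have [_ _ hg] := hK _ _ D (good1 _ ha) (good1 _ ha') hD hA hB.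
rewrite /dist_Cn /dist_Cn2 -/D -sqrtrM ?mulr_ge0 // ler_sqrt ?mulr_ge0 //.
apply: (@le_trans _ _ (\sum_(k < n) K * D)).
  apply: ler_sum => k _; rewrite -!extE; apply: hg.
  by rewrite subnn leq0n ltn_ord.
by rewrite sumr_const card_ord -[K * D *+ n]mulr_natl mulrA.
Qed.
End S.

Unset Implicit Arguments.

(* Since the NLFT is a bijection onto S_n, points of S_{n,delta} are exactly
   the NLFTs (a,b) of sequences gam with a_0 > delta, and the inverse NLFT
   sends NLFT(gam) back to gam. *)
Theorem corollary6p3 (R : realType) (n : nat) (delta : R) :
  (2 <= n)%N -> 0 < delta ->
  exists L : R,
    forall (Hn : (0 < n)%N) (gam gam' : 'I_n -> R[i]),
      delta%:C < nlft_a gam (Ordinal Hn) ->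
      delta%:C < nlft_a gam' (Ordinal Hn) ->
      dist_Cn gam gam' <=
        L * dist_Cn2 (nlft_a gam) (nlft_b gam) (nlft_a gam') (nlft_b gam').
Proof.
move=> _ hd; exact: (@final R n delta hd).
Qed.
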